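(* Let $q\ge2$ and $b\in\mathbb{R}$, and let $U_C(b)$ be the operator on $\mathbb{C}^q\otimes\mathbb{C}^q$ with $\langle k\alpha|U_C(b)|j\beta\rangle=\frac1q\exp(\frac{2\pi i}{q}[bj\beta+(k\beta+j\alpha)])$, $k,\alpha,j,\beta\in\{0,\dots,q-1\}$. Then $U_C(b)=(F_q\otimes F_q)\,S\,D(b)$, where $F_q$ is the $q$-dimensional discrete Fourier transform and $D(b)$ is the diagonal unitary $\langle k\alpha|D(b)|j\beta\rangle=e^{2\pi i bj\beta/q}\delta_{kj}\delta_{\alpha\beta}$; consequently $U_C(b)$ is dual-unitary for every real $b$, and $e_p(U_C(b))\le\frac{q}{q+1}$, with equality for $b=1$.
   Context: Product basis $|i\alpha\rangle$; realignment $\langle\beta\alpha|X^{R_1}|ji\rangle=\langle i\alpha|X|j\beta\rangle$; a unitary is dual-unitary if its realignment is unitary. $S$ is the swap operator; $F_q$ has entries $\langle m|F_q|n\rangle=q^{-1/2}e^{2\pi i mn/q}$. $E(U)=1-q^{-4}\operatorname{tr}[(U^{R_1}U^{R_1\dagger})^2]$, $E(S)=1-1/q^2$, $e_p(U)=\frac{E(U)+E(US)-E(S)}{E(S)}$. *)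

(* Defs.v *)
(* R : realType (mathcomp-analysis, for cos/sin/pi),
   complex numbers C = R[i] (mathcomp-real-closed complex),
   operators on C^q (x) C^q = square matrices of size q*q, with the
   product basis |i alpha> encoded by mxtens_index (i, alpha) = i*q + alpha. *)
From HB Require Import structures.
From mathcomp Require Import all_boot all_order all_algebra.
From mathcomp Require Import all_classical all_reals all_analysis.
From mathcomp Require Import complex mxtens.
Set Implicit Arguments. Unset Strict Implicit. Unset Printing Implicit Defensive.
Import Order.TTheory GRing.Theory Num.Theory.
Local Open Scope ring_scope.

Section Defs.
Variable R : realType.
Local Notation C := (R[i]).

Definition expi (t : R) : C := Complex (cos t) (sin t).

Definition bidx (q : nat) (i a : 'I_q) : 'I_(q * q) := mxtens_index (i, a).

Definition adj (n : nat) (A : 'M[C]_n) : 'M[C]_n := (map_mx Num.conj A)^T.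

Definition unitary (n : nat) (U : 'M[C]_n) : Prop :=
  U *m adj U = 1%:M /\ adj U *m U = 1%:M.

Definition realign (q : nat) (X : 'M[C]_(q * q)) : 'M[C]_(q * q) :=
  \matrix_(x, y)
    let: (be, al) := mxtens_unindex x in
    let: (j, i) := mxtens_unindex y in
    X (bidx i al) (bidx j be).

Definition dual_unitary (q : nat) (U : 'M[C]_(q * q)) : Prop :=
  unitary U /\ unitary (realign U).

Definition swap_op (q : nat) : 'M[C]_(q * q) :=
  \matrix_(x, y)
    (((mxtens_unindex x).1 == (mxtens_unindex y).2) &&
     ((mxtens_unindex x).2 == (mxtens_unindex y).1))%:R.

Definition dft (q : nat) : 'M[C]_q :=
  \matrix_(m, n) ((Complex ((Num.sqrt (q%:R : R))^-1) 0)
                 * expi (2 * pi * (m%:R * n%:R) / q%:R)).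

Definition ent_power (q : nat) (U : 'M[C]_(q * q)) : C :=
  1 - (q%:R ^- 4) * \tr ((realign U *m adj (realign U)) ^+ 2).

Definition e_p (q : nat) (U : 'M[C]_(q * q)) : C :=
  (ent_power U + ent_power (U *m swap_op q) - ent_power (swap_op q))
    / ent_power (swap_op q).

Definition UC (q : nat) (b : R) : 'M[C]_(q * q) :=
  \matrix_(x, y)
    let: (k, al) := mxtens_unindex x in
    let: (j, be) := mxtens_unindex y in
    (q%:R : C)^-1 * expi (2 * pi / q%:R *
        (b * j%:R * be%:R + (k%:R * be%:R + j%:R * al%:R))).

Definition Dmat (q : nat) (b : R) : 'M[C]_(q * q) :=
  \matrix_(x, y)
    let: (k, al) := mxtens_unindex x in
    let: (j, be) := mxtens_unindex y in
    ((k == j) && (al == be))%:R * expi (2 * pi * b * j%:R * be%:R / q%:R).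

End Defs.

(* Main.v *)
Require Import Defs.
From HB Require Import structures.
From mathcomp Require Import all_boot all_order all_algebra.
From mathcomp Require Import all_classical all_reals all_analysis.
From mathcomp Require Import complex mxtens.
From mathcomp Require Import ring lra.
Import Order.TTheory GRing.Theory Num.Theory.
Set Implicit Arguments. Unset Strict Implicit. Unset Printing Implicit Defensive.
Local Open Scope ring_scope.

Section Aux.
Variable R : realType.
Local Notation C := (R[i]).

Lemma expiD (a b : R) : expi (a + b) = expi a * expi b.
Proof. rewrite /expi cosD sinD. apply/eqP; rewrite eq_complex /=. apply/andP; split; apply/eqP; ring. Qed.

Lemma expi0 : expi (0 : R) = 1.
Proof. by rewrite /expi cos0 sin0. Qed.

Lemma conj_expi (t : R) : Num.conj (expi t) = expi (- t).
Proof. by rewrite /expi cosN sinN. Qed.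

Lemma expiMn (n : nat) (t : R) : expi (n%:R * t) = expi t ^+ n.
Proof.
elim: n => [|n IH]; first by rewrite mul0r expi0 expr0.
by rewrite exprS -IH -expiD mulrSr; congr expi; ring.
Qed.

Lemma expi2pin (n : nat) : expi (2 * pi * n%:R) = 1 :> C.
Proof.
rewrite mulrC expiMn.
have -> : expi (2 * pi) = 1 :> C by rewrite /expi mulr_natl cos2pi sin2pi.
by rewrite expr1n.
Qed.

Lemma expi_neq1 (x : R) : 0 < x < 2 * pi -> expi x != 1 :> C.
Proof.
move=> /andP [x0 x2]; apply/negP => /eqP [] hc _.
have hs : 0 < sin (x / 2) by apply: sin_gt0_pi; apply/andP; split; lra.
move: hc hs; set y := x / 2; have -> : x = y + y by rewrite /y; field.
rewrite cosD => hc hs.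
have h := cos2Dsin2 y.
nra.
Qed.

Definition ee (q : nat) (t : R) : C := expi (2 * pi / q%:R * t).

Lemma eeD q (a b : R) : ee q (a + b) = ee q a * ee q b.
Proof. by rewrite /ee mulrDr expiD. Qed.

Lemma ee0 q : ee q 0 = 1.
Proof. by rewrite /ee mulr0 expi0. Qed.

Lemma conj_ee q t : Num.conj (ee q t) = ee q (- t).
Proof. by rewrite /ee conj_expi mulrN. Qed.

Lemma ee_conj q t : ee q t * Num.conj (ee q t) = 1.
Proof. by rewrite conj_ee -eeD subrr ee0. Qed.

Lemma angle_range (q : nat) (d : R) : (0 < q)%N -> 0 < d < q%:R ->
  0 < 2 * pi / q%:R * d < 2 * pi.
Proof.
move=> q0 /andP [d0 dq].
have qp : 0 < q%:R :> R by rewrite ltr0n.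
have -> : 2 * pi / q%:R * d = 2 * pi * (d / q%:R) by field; rewrite gt_eqF.
have t1 : d / q%:R < 1 by rewrite ltr_pdivrMr // mul1r.
have t0 : 0 < d / q%:R by rewrite divr_gt0.
have := pi_gt0 R; nra.
Qed.

Lemma orth (q : nat) (a c : 'I_q) :
  \sum_(j < q) ee q (j%:R * (a%:R - c%:R)) = (a == c)%:R * q%:R.
Proof.
have q0 : (0 < q)%N by case: q a c => [[]|].
have qp : 0 < q%:R :> R by rewrite ltr0n.
case: eqP => [<-|ne].
  rewrite mul1r subrr; under eq_bigr do rewrite mulr0 ee0.
  by rewrite sumr_const card_ord.
rewrite mul0r.
set w := ee q (a%:R - c%:R).
have ew : forall j : 'I_q, ee q (j%:R * (a%:R - c%:R)) = w ^+ j.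
  by move=> j; rewrite /w /ee -expiMn; congr expi; ring.
under eq_bigr do rewrite ew.
have wq : w ^+ q = 1.
  rewrite /w /ee -expiMn.
  have -> : q%:R * (2 * pi / q%:R * (a%:R - c%:R)) = 2 * pi * a%:R + - (2 * pi * c%:R) :> R.
    by field; rewrite gt_eqF.
  rewrite expiD expi2pin mul1r.
  have h := expiD (2 * pi * c%:R) (- (2 * pi * c%:R)).
  by rewrite subrr expi0 expi2pin mul1r in h.
have w1 : w != 1.
  have [lt|gt] : (c < a)%N \/ (a < c)%N.
      by case: (ltngtP a c) => h; [right|left|case: ne; apply: val_inj].
    apply: expi_neq1; apply: angle_range => //.
    rewrite subr_gt0 ltr_nat lt /=.
    have : (a%:R < q%:R :> R) by rewrite ltr_nat.
    have : 0 <= c%:R :> R by [].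
    lra.
  apply/negP => /eqP hw.
  have : Num.conj w = 1 by rewrite hw rmorph1.
  rewrite /w conj_ee opprB /ee => h.
  suff : 0 < 2 * (@pi R) / q%:R * (c%:R - a%:R) < 2 * (@pi R).
    by move=> H; move: (expi_neq1 H); rewrite h eqxx.
  apply: angle_range => //.
  rewrite subr_gt0 ltr_nat gt /=.
  have : (c%:R < q%:R :> R) by rewrite ltr_nat.
  have : 0 <= a%:R :> R by [].
  lra.
have := subrX1 w q; rewrite wq subrr => /esym /eqP.
by rewrite mulf_eq0 subr_eq0 (negbTE w1) => /eqP.
Qed.
End Aux.
Section Mx.
Variable R : realType.
Local Notation C := (R[i]).
Variable q : nat.

Lemma sum_idx (F : 'I_(q * q) -> C) :
  \sum_z F z = \sum_(a < q) \sum_(c < q) F (bidx a c).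
Proof.
rewrite pair_big /= (reindex (@mxtens_index q q)).
  by apply: eq_bigr => -[a c].
by exists (@mxtens_unindex q q) => x _; [apply: mxtens_indexK | apply: mxtens_unindexK].
Qed.

Lemma bidx_eq (a c a' c' : 'I_q) : (bidx a c == bidx a' c') = (a == a') && (c == c').
Proof. by rewrite /bidx (can_eq (@mxtens_indexK q q)) xpair_eqE. Qed.

Lemma mx_bidx (A B : 'M[C]_(q * q)) :
  (forall a c a' c', A (bidx a c) (bidx a' c') = B (bidx a c) (bidx a' c')) -> A = B.
Proof.
move=> h; apply/matrixP => x y.
by rewrite -(mxtens_unindexK x) -(mxtens_unindexK y); case: (mxtens_unindex x); case: (mxtens_unindex y) => ? ? ? ?; apply: h.
Qed.

Lemma mulE (A B : 'M[C]_(q * q)) x y :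
  (A *m B) x y = \sum_(a < q) \sum_(c < q) A x (bidx a c) * B (bidx a c) y.
Proof. by rewrite mxE sum_idx. Qed.

Lemma adjE (A : 'M[C]_(q * q)) x y : adj A x y = Num.conj (A y x).
Proof. by rewrite /adj !mxE. Qed.

Lemma oneE a c a' c' : (1%:M : 'M[C]_(q * q)) (bidx a c) (bidx a' c') = ((a == a') && (c == c'))%:R.
Proof. by rewrite mxE bidx_eq. Qed.

Lemma swapE a c a' c' : swap_op R q (bidx a c) (bidx a' c') = ((a == c') && (c == a'))%:R.
Proof. by rewrite /swap_op mxE /bidx !mxtens_indexK. Qed.

Lemma realignE (X : 'M[C]_(q * q)) be al j i :
  realign X (bidx be al) (bidx j i) = X (bidx i al) (bidx j be).
Proof. by rewrite /realign mxE /bidx !mxtens_indexK. Qed.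

Lemma UCE (b : R) k al j be :
  UC q b (bidx k al) (bidx j be) = (q%:R)^-1 * ee q (b * j%:R * be%:R + (k%:R * be%:R + j%:R * al%:R)).
Proof. by rewrite /UC mxE /bidx !mxtens_indexK. Qed.

Lemma DE (b : R) k al j be :
  Dmat q b (bidx k al) (bidx j be) = ((k == j) && (al == be))%:R * ee q (b * j%:R * be%:R).
Proof. rewrite /Dmat mxE /bidx !mxtens_indexK /ee; congr (_ * expi _).
ring.
Qed.

Lemma mulswap (X : 'M[C]_(q * q)) x j be :
  (X *m swap_op R q) x (bidx j be) = X x (bidx be j).
Proof.
rewrite mulE (bigD1 be) //= [X in _ + X]big1 ?addr0 => [|a ne]; last first.
  by apply: big1 => c _; rewrite swapE (negbTE ne) mulr0.
rewrite (bigD1 j) //= [X in _ + X]big1 ?addr0 => [|c ne]; last first.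
  by rewrite swapE eqxx (negbTE ne) mulr0.
by rewrite swapE !eqxx mulr1.
Qed.

Lemma mulD (X : 'M[C]_(q * q)) (b : R) x j be :
  (X *m Dmat q b) x (bidx j be) = X x (bidx j be) * ee q (b * j%:R * be%:R).
Proof.
rewrite mulE (bigD1 j) //= [X in _ + X]big1 ?addr0 => [|a ne]; last first.
  by apply: big1 => c _; rewrite DE (negbTE ne) mul0r mulr0.
rewrite (bigD1 be) //= [X in _ + X]big1 ?addr0 => [|c ne]; last first.
  by rewrite DE eqxx (negbTE ne) mul0r mulr0.
by rewrite DE !eqxx mul1r.
Qed.

Lemma herm (M : 'M[C]_(q * q)) x y :
  (M *m adj M) y x = Num.conj ((M *m adj M) x y).
Proof.
rewrite !mxE rmorph_sum; apply: eq_bigr => z _.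
by rewrite !adjE rmorphM /= conjCK mulrC.
Qed.

End Mx.

Section Main.
Variable R : realType.
Local Notation C := (R[i]).
Variable q : nat.
Hypothesis hq : (2 <= q)%N.

Lemma qR0 : (q%:R : C) != 0. Proof. by rewrite pnatr_eq0; case: q hq. Qed.

Lemma dftE m n : dft R q m n = Complex ((Num.sqrt (q%:R : R))^-1) 0 * ee q (m%:R * n%:R).
Proof. rewrite /dft mxE /ee; congr (_ * expi _); ring. Qed.

Lemma sE : Complex ((Num.sqrt (q%:R : R))^-1) 0 * Complex ((Num.sqrt (q%:R : R))^-1) 0 = (q%:R : C)^-1.
Proof.
rewrite !complexr0 -rmorphM /= -invfM -expr2 sqr_sqrtr ?ler0n //.
by rewrite fmorphV /= rmorph_nat.
Qed.

Lemma part1 (b : R) : UC q b = (tensmx (dft R q) (dft R q) *m swap_op R q) *m Dmat q b.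
Proof.
apply: mx_bidx => k al j be.
rewrite mulD mulswap /bidx tensmxE !dftE UCE.
rewrite -sE.
have -> : forall (s x y z : C), s * x * (s * y) * z = s * s * (x * y * z) by move=> *; ring.
rewrite -!eeD; congr (_ * ee q _); ring.
Qed.


Lemma termE (X Y : R) :
  ((q%:R : C)^-1 * ee q X) * Num.conj ((q%:R : C)^-1 * ee q Y) = (q%:R : C)^-1 * (q%:R)^-1 * ee q (X - Y).
Proof.
rewrite rmorphM /= fmorphV /= rmorph_nat conj_ee eeD; ring.
Qed.

Lemma adjD (b : R) : adj (Dmat q b) = Dmat q (- b).
Proof.
apply: mx_bidx => k al j be.
rewrite adjE !DE rmorphM /= rmorph_nat conj_ee (eq_sym j) (eq_sym be).
case: (k =P j) => [->|]; case: (al =P be) => [->|] //=; rewrite ?mul0r //.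
by rewrite !mul1r; congr (ee q _); ring.
Qed.

Lemma unitD (b : R) : unitary (Dmat q b).
Proof.
have h : Dmat q b *m adj (Dmat q b) = 1%:M.
  rewrite adjD; apply: mx_bidx => k al j be.
  rewrite mulD DE oneE -mulrA -eeD.
  have -> : b * j%:R * be%:R + - b * j%:R * be%:R = 0 by ring.
  by rewrite ee0 mulr1.
by split => //; apply: mulmx1C.
Qed.

Lemma unitUC (b : R) : unitary (UC q b).
Proof.
have h : UC q b *m adj (UC q b) = 1%:M.
  apply: mx_bidx => k al k' al'.
  rewrite mulE oneE.
  transitivity ((q%:R : C)^-1 * (q%:R)^-1 *
     ((\sum_(a < q) ee q (a%:R * (al%:R - al'%:R))) * (\sum_(c < q) ee q (c%:R * (k%:R - k'%:R))))).
    rewrite big_distrlr big_distrr /=; apply: eq_bigr => a _.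
    rewrite big_distrr /=; apply: eq_bigr => c _.
    rewrite adjE !UCE termE -eeD; congr (_ * ee q _); ring.
  rewrite !orth.
  have := qR0.
  by case: (al =P al'); case: (k =P k') => //= _ _ hq0; rewrite ?mul0r ?mulr0 //; field.
by split => //; apply: mulmx1C.
Qed.

Lemma unitRUC (b : R) : unitary (realign (UC q b)).
Proof.
have h : realign (UC q b) *m adj (realign (UC q b)) = 1%:M.
  apply: mx_bidx => be al be' al'.
  rewrite mulE oneE.
  transitivity ((q%:R : C)^-1 * (q%:R)^-1 *
     \sum_(a < q) (ee q (b * a%:R * (be%:R - be'%:R) + a%:R * (al%:R - al'%:R)) * \sum_(c < q) ee q (c%:R * (be%:R - be'%:R)))).
    rewrite big_distrr /=; apply: eq_bigr => a _.
    rewrite big_distrr big_distrr /=; apply: eq_bigr => c _.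
    rewrite adjE !realignE !UCE termE -eeD; congr (_ * ee q _); ring.
  rewrite orth.
  case: (be =P be') => [<-|] /=; last first.
    by move=> _; rewrite big1 ?mulr0 // => a _; rewrite !mul0r mulr0.
  under eq_bigr do rewrite subrr mulr0 add0r mul1r.
  rewrite -big_distrl /= orth.
  have := qR0.
  by case: (al =P al') => //= _ hq0; rewrite ?mul0r ?mulr0 //; field.
by split => //; apply: mulmx1C.
Qed.

Lemma adjS : adj (swap_op R q) = swap_op R q.
Proof.
apply: mx_bidx => k al j be.
by rewrite adjE !swapE rmorph_nat (eq_sym j) (eq_sym be) andbC.
Qed.

Lemma realignS : realign (swap_op R q) = swap_op R q.
Proof.
apply: mx_bidx => k al j be.
by rewrite realignE !swapE (eq_sym be).
Qed.

Lemma SS : swap_op R q *m adj (swap_op R q) = 1%:M.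
Proof.
rewrite adjS; apply: mx_bidx => k al j be.
by rewrite mulswap swapE oneE.
Qed.

Lemma ent_unit (X : 'M[C]_(q * q)) :
  realign X *m adj (realign X) = 1%:M -> ent_power X = 1 - (q%:R)^-4 * (q * q)%:R.
Proof. by move=> h; rewrite /ent_power h expr1n mxtrace1. Qed.


Definition G (b : R) (be be' al al' : 'I_q) : C :=
  (q%:R : C)^-1 * \sum_(j < q) ee q (b * j%:R * (be%:R - be'%:R) + (be%:R * al%:R - be'%:R * al'%:R)).

Definition MUS (b : R) := realign (UC q b *m swap_op R q).

Lemma AE (b : R) be al be' al' :
  (MUS b *m adj (MUS b)) (bidx be al) (bidx be' al') = G b be be' al al'.
Proof.
rewrite mulE /G big_distrr /=; apply: eq_bigr => a _.
transitivity (\sum_(c < q) (q%:R : C)^-1 * (q%:R)^-1 *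
   ee q (b * a%:R * (be%:R - be'%:R) + (be%:R * al%:R - be'%:R * al'%:R))).
  apply: eq_bigr => c _.
  rewrite adjE /MUS !realignE !mulswap !UCE termE; congr (_ * ee q _); ring.
rewrite sumr_const card_ord -mulr_natr.
move: (ee q _) => e; field; exact: qR0.
Qed.

Lemma trE (b : R) :
  \tr ((realign (UC q b *m swap_op R q) *m adj (realign (UC q b *m swap_op R q))) ^+ 2) =
  \sum_(be < q) \sum_(al < q) \sum_(be' < q) \sum_(al' < q)
     G b be be' al al' * Num.conj (G b be be' al al').
Proof.
rewrite -/(MUS b) expr2 -mulmxE /mxtrace sum_idx.
apply: eq_bigr => be _; apply: eq_bigr => al _.
rewrite mulE; apply: eq_bigr => be' _; apply: eq_bigr => al' _.
by rewrite [X in _ * X]herm !AE.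
Qed.

Lemma Gdiag (b : R) be al al' : G b be be al al' * Num.conj (G b be be al al') = 1.
Proof.
rewrite /G.
under eq_bigr do rewrite subrr mulr0 add0r.
rewrite sumr_const card_ord.
have -> : forall e : C, (q%:R : C)^-1 * (e *+ q) = e.
  by move=> e; rewrite -mulr_natr; field; exact: qR0.
exact: ee_conj.
Qed.

Lemma Goff be be' al al' : be != be' -> G 1 be be' al al' = 0.
Proof.
move=> ne; rewrite /G.
under eq_bigr do rewrite eeD mul1r.
by rewrite -big_distrl /= orth (negbTE ne) !mul0r mulr0.
Qed.

Definition Noff (b : R) : C :=
  \sum_(be < q) \sum_(al < q) \sum_(be' < q | be' != be) \sum_(al' < q)
     G b be be' al al' * Num.conj (G b be be' al al').

Lemma trE2 (b : R) :
  \tr ((realign (UC q b *m swap_op R q) *m adj (realign (UC q b *m swap_op R q))) ^+ 2) =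
  (q * q * q)%:R + Noff b.
Proof.
rewrite trE /Noff.
transitivity (\sum_(be < q) \sum_(al < q) ((q%:R : C) + 
  \sum_(be' < q | be' != be) \sum_(al' < q) G b be be' al al' * Num.conj (G b be be' al al'))).
  apply: eq_bigr => be _; apply: eq_bigr => al _.
  rewrite (bigD1 be) //=.
  under eq_bigr do rewrite Gdiag.
  by rewrite sumr_const card_ord.
transitivity (\sum_(be < q) (((q%:R : C) *+ q) + \sum_(al < q)
  \sum_(be' < q | be' != be) \sum_(al' < q) G b be be' al al' * Num.conj (G b be be' al al'))).
  by apply: eq_bigr => be _; rewrite big_split /= sumr_const card_ord.
rewrite big_split /= sumr_const card_ord.
by rewrite -!mulrnA mulnA.
Qed.


Lemma Noff_ge0 (b : R) : 0 <= Noff b.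
Proof.
by rewrite /Noff; do 4! (apply: sumr_ge0 => ? _); apply: mul_conjC_ge0.
Qed.

Lemma Noff1 : Noff 1 = 0.
Proof.
rewrite /Noff; apply: big1 => be _; apply: big1 => al _; apply: big1 => be' ne.
by apply: big1 => al' _; rewrite Goff 1?eq_sym // mul0r.
Qed.


Lemma ep_formula (b : R) :
  e_p (UC q b) = (q%:R : C) / (q%:R + 1) - Noff b / ((q%:R : C) ^+ 2 * ((q%:R : C) ^+ 2 - 1)).
Proof.
have h1 : (q%:R : C) != 0 := qR0.
have h2 : (q%:R : C) - 1 != 0.
  by rewrite subr_eq0 pnatr_eq1; case: q hq => [|[]].
have h3 : (q%:R : C) + 1 != 0.
  by have := (@pnatr_eq0 C (q + 1)); rewrite natrD addn1 => ->.
rewrite /e_p (ent_unit (unitRUC b).1).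
rewrite (@ent_unit (swap_op R q)); last by rewrite realignS SS.
rewrite {1}/ent_power trE2 !natrM.
move: (Noff b) => N.
have h4 : (q%:R : C) ^+ 2 - 1 != 0.
  have -> : (q%:R : C) ^+ 2 - 1 = ((q%:R : C) - 1) * (q%:R + 1) by ring.
  by rewrite mulf_neq0.
by field; rewrite h4 h1 h3.
Qed.

Lemma ep_le (b : R) : e_p (UC q b) <= (q%:R / (q%:R + 1) : C).
Proof.
rewrite ep_formula gerBl divr_ge0 ?Noff_ge0 // mulr_ge0 ?exprn_ge0 ?ler0n //.
by rewrite subr_ge0 -natrX ler1n expn_gt0; case: q hq.
Qed.

Lemma ep_eq : e_p (UC q 1) = (q%:R / (q%:R + 1) : C).
Proof. by rewrite ep_formula Noff1 mul0r subr0. Qed.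

End Main.

Theorem mainTheorem9 (R : realType) (q : nat) (hq : (2 <= q)%N) (b : R) :
  UC q b = (tensmx (dft R q) (dft R q) *m swap_op R q) *m Dmat q b
  /\ unitary (Dmat q b)
  /\ dual_unitary (UC q b)
  /\ e_p (UC q b) <= (q%:R / (q%:R + 1) : R[i])
  /\ e_p (UC q 1) = (q%:R / (q%:R + 1) : R[i]).
Proof.
split; first exact: part1.
split; first exact: unitD.
split; first by split; [exact: unitUC | exact: unitRUC].
split; [exact: ep_le | exact: ep_eq].
Qed.
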